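(* Let $G$ be an $X-Y$ normalized graph. Each sequence $(S_1,\dots,S_r)$ of pairwise disjoint non-empty subsets of $V(G)$ is the attribute of at most one compound witness (with respect to $X$ and $Y$ in $G$).
   Context: $G$ is a finite undirected graph, $X,Y$ disjoint subsets of $V(G)$; $N(C)=(\bigcup_{v\in C}N(v))\setminus C$. An $X-Y$ separator is a set $K \subseteq V(G) \setminus (X \cup Y)$ such that $G \setminus K$ has no path from $X$ to $Y$; minimal means inclusion-minimal. A graph $H$ is $X-Y$ normalized if $N(X)$ is the only minimum-cardinality $X-Y$ separator of $H$. In $H$, let $r_H$ be the minimum size of an $X-Y$ separator; the excess of an $X-Y$ separator $K$ is $|K|-r_H$. $NR(H,Y,K)$ is the set of vertices not reachable from $Y$ in $H\setminus K$; $K \geq K'$ means $NR(H,Y,K)\supseteq NR(H,Y,K')$, $K'<K$ means $K\ge K'$ and the $NR$ sets differ. A minimal $X-Y$ separator $K$ is important if there is no $X-Y$ separator $K'$ with $K<K'$ and $|K|\ge |K'|$. For $S\subseteq N(X)$ with no vertex adjacent to $Y$, the cover excess $CE(S)$ is the excess of a smallest $X-Y$ separator disjoint from $S$; a witness of $S$ is an $X-Y$ separator disjoint from $S$ with excess $CE(S)$; in a normalized graph there is a unique witness of $S$ that is an important $X-Y$ separator, denoted $K(S)$. $Pr(H,X,Y,K)$ is the graph obtained from $H\setminus (NR(H,Y,K)\setminus X)$ by making $X$ adjacent to all vertices of $K$ (for $K$ important, it is $X-Y$ normalized). Compound witness: for an $X-Y$ normalized graph $H$, a sequence $(S_1,\dots,S_r)$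 of pairwise disjoint non-empty vertex sets and an $X-Y$ separator $K$, $K$ is a compound witness of the attribute $(S_1,\dots,S_r)$ w.r.t. $X,Y$ in $H$ if: when $r=1$, $S_1\subseteq N(X)$ and $K=K(S_1)$; when $r>1$, $K(S_1)$ is defined (i.e. $S_1\subseteq N(X)$, not adjacent to $Y$), $S_2\cup\dots\cup S_r$ is disjoint from $N(X)$, and $K$ is a compound witness of $(S_2,\dots,S_r)$ w.r.t. $X,Y$ in $Pr(H,X,Y,K(S_1))$. The rank of $K$ is $|S_1|+\dots+|S_r|$. *)

(* Defs.v *)
From mathcomp Require Import all_boot.
Set Implicit Arguments. Unset Strict Implicit. Unset Printing Implicit Defensive.

(* A finite undirected graph on (a subset of) a finite type V:
   vertex set [verts] and an arbitrary relation [adj]; the actual edge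
   relation [edge] is the symmetrization of [adj], restricted to [verts],
   without loops. *)
Record graph (V : finType) := Graph { verts : {set V}; adj : rel V }.

Section Defs.
Variable V : finType.
Implicit Types (g : graph V) (X Y K S C : {set V}).

Definition edge g : rel V := fun u v =>
  [&& u \in verts g, v \in verts g, u != v & adj g u v || adj g v u].

Definition Nbr g C : {set V} :=
  [set u | (u \notin C) && [exists v in C, edge g v u]].

Definition edge_minus g K : rel V := fun u v =>
  [&& edge g u v, u \notin K & v \notin K].

Definition has_path g K X Y : bool :=
  [exists x in X, exists y in Y,
     [&& x \notin K, y \notin K & connect (edge_minus g K) x y]].

Definition separator g X Y K : Prop :=
  K \subset verts g :\: (X :|: Y) /\ ~~ has_path g K X Y.

Definition minimal_separator g X Y K : Prop :=
  separator g X Y K /\ forall K', K' \proper K -> ~ separator g X Y K'.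

Definition minimum_separator g X Y K : Prop :=
  separator g X Y K /\ forall K', separator g X Y K' -> #|K| <= #|K'|.

Definition normalized g X Y : Prop :=
  forall K, minimum_separator g X Y K <-> K = Nbr g X.

Definition NR g Y K : {set V} :=
  [set v in verts g :\: K |
     ~~ [exists y in Y, (y \notin K) && connect (edge_minus g K) y v]].

Definition sep_ge g Y K K' : Prop := NR g Y K' \subset NR g Y K.
Definition sep_lt g Y K' K : Prop := sep_ge g Y K K' /\ NR g Y K != NR g Y K'.

Definition important g X Y K : Prop :=
  minimal_separator g X Y K /\
  ~ exists K', [/\ separator g X Y K', sep_lt g Y K K' & #|K'| <= #|K|].

(* witness of S: a separator disjoint from S of minimum excess among
   separators disjoint from S (excess = |K| - r_g, r_g a constant, so this
   is minimum cardinality among separators disjoint from S) *)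
Definition witness g X Y S K : Prop :=
  [/\ separator g X Y K, [disjoint K & S] &
      forall K', separator g X Y K' -> [disjoint K' & S] -> #|K| <= #|K'|].

Definition isKS g X Y S K : Prop :=
  [/\ S \subset Nbr g X,
      [forall s in S, forall y in Y, ~~ edge g s y],
      witness g X Y S K & important g X Y K].

Definition Pr g X Y K : graph V :=
  Graph (verts g :\: (NR g Y K :\: X))
        (fun u v => adj g u v || (u \in X) && (v \in K)).

Fixpoint compound_witness g X Y (Ss : seq {set V}) K : Prop :=
  match Ss with
  | [::] => False
  | S1 :: rest =>
      match rest with
      | [::] => [/\ normalized g X Y, S1 \subset Nbr g X & isKS g X Y S1 K]
      | _ :: _ =>
          normalized g X Y /\
          exists K1, [/\ isKS g X Y S1 K1,
                        [disjoint \bigcup_(S <- rest) S & Nbr g X] &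
                        compound_witness (Pr g X Y K1) X Y rest K]
      end
  end.

End Defs.

(* Main.v *)
Require Import Defs.

From mathcomp Require Import all_boot.
Set Implicit Arguments. Unset Strict Implicit. Unset Printing Implicit Defensive.

Section Helpers.
Variable V : finType.
Implicit Types (g : graph V) (X Y K S : {set V}).

Lemma connect_inv (e : rel V) (P : pred V) x y :
  P x -> (forall u v, P u -> e u v -> P v) -> connect e x y -> P y.
Proof.
move=> Px st /connectP [p pth ->]; elim: p x Px pth => [|a p IH] x Px //=.
case/andP=> exa pth; apply: IH pth; exact: st exa.
Qed.

Lemma edge_sym g : symmetric (edge g).
Proof.
move=> u v; rewrite /edge; apply/and4P/and4P; case=> a b c d; split=> //;
  by rewrite 1?eq_sym 1?orbC.
Qed.

Lemma edge_minus_sym g K : symmetric (edge_minus g K).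
Proof.
move=> u v; rewrite /edge_minus edge_sym; by case: (u \in K); case: (v \in K); rewrite ?andbF.
Qed.

Lemma connect_minus_sym g K u v :
  connect (edge_minus g K) u v = connect (edge_minus g K) v u.
Proof. exact: (sym_connect_sym (edge_minus_sym g K)). Qed.

Lemma edge_vR g u v : edge g u v -> v \in verts g.
Proof. by case/and4P. Qed.
Lemma edge_vL g u v : edge g u v -> u \in verts g.
Proof. by case/and4P. Qed.

Lemma NR_unreach g Y K y u : u \in NR g Y K -> y \in Y -> y \notin K ->
  connect (edge_minus g K) y u -> False.
Proof.
rewrite /NR inE => /andP [_ /existsPn H] yY ynK c.
by move: (H y); rewrite yY ynK c.
Qed.

Lemma NR_sub g Y K : NR g Y K \subset verts g :\: K.
Proof. by apply/subsetP=> v; rewrite inE => /andP []. Qed.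

Lemma notNR g Y K v : v \in verts g -> v \notin K -> v \notin NR g Y K ->
  exists2 y, y \in Y & (y \notin K) && connect (edge_minus g K) y v.
Proof.
move=> vv vK; rewrite /NR inE inE vv vK /= negbK => /existsP [y /andP [yY H]].
by exists y.
Qed.

Lemma sep_notin g X Y K v : separator g X Y K -> v \in X :|: Y -> v \notin K.
Proof.
case=> /subsetP sK _ vXY; apply/negP=> /sK; by rewrite inE vXY.
Qed.

Lemma X_NR g X Y K x : separator g X Y K -> x \in X -> x \in verts g -> x \in NR g Y K.
Proof.
move=> sep xX xv; have xK : x \notin K by apply: sep_notin sep _; rewrite inE xX.
rewrite /NR inE inE xv xK /=; apply/existsPn=> y; apply/negP=> /andP [yY] /andP [yK c].
case: sep => _ /negP; apply; apply/existsP; exists x; rewrite xX /=.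
apply/existsP; exists y; by rewrite yY xK yK connect_minus_sym.
Qed.

Lemma step_NR g Y K v w : v \in verts g -> v \notin K -> v \notin NR g Y K ->
  w \notin K -> edge g v w -> w \notin NR g Y K.
Proof.
move=> vv vK vN wK e; case: (@notNR g Y K v vv vK vN) => y yY /andP [yK c].
apply/negP=> wN; apply: (@NR_unreach g Y K y w wN yY yK).
apply: connect_trans c _; apply: connect1; by rewrite /edge_minus e vK wK.
Qed.

End Helpers.

Section Core.
Variable V : finType.
Variables (g : graph V) (X Y : {set V}).
Hypothesis Xv : X \subset verts g.

Definition kc (K1 K2 : {set V}) := (K1 :|: K2) :\: (NR g Y K1 :|: NR g Y K2).
Definition ka (K1 K2 : {set V}) :=
  (K1 :&: K2) :|: (K1 :&: NR g Y K2) :|: (K2 :&: NR g Y K1).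

Lemma kcC K1 K2 : kc K1 K2 = kc K2 K1.
Proof. by rewrite /kc setUC [NR g Y K1 :|: _]setUC. Qed.
Lemma kaC K1 K2 : ka K1 K2 = ka K2 K1.
Proof. by rewrite /ka [K2 :&: K1]setIC -!setUA [(K1 :&: NR g Y K2) :|: _]setUC. Qed.

Lemma kc_sub K1 K2 : kc K1 K2 \subset K1 :|: K2.
Proof. exact: subsetDl. Qed.
Lemma ka_sub K1 K2 : ka K1 K2 \subset K1 :|: K2.
Proof.
apply/subsetP=> v; rewrite !inE; by case: (v \in K1); case: (v \in K2); rewrite ?andbF.
Qed.

Variables K1 K2 : {set V}.
Hypothesis s1 : separator g X Y K1.
Hypothesis s2 : separator g X Y K2.

Lemma sep_union_sub (K : {set V}) : K \subset K1 :|: K2 -> K \subset verts g :\: (X :|: Y).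
Proof.
move=> /subset_trans; apply; case: s1 => h1 _; case: s2 => h2 _.
by rewrite subUset h1 h2.
Qed.

Lemma reach_c y v : y \in Y -> connect (edge_minus g (kc K1 K2)) y v ->
  [/\ v \notin K1, v \notin K2, connect (edge_minus g K1) y v &
      connect (edge_minus g K2) y v].
Proof.
move=> yY c.
have y1 : y \notin K1 by apply: sep_notin s1 _; rewrite inE yY orbT.
have y2 : y \notin K2 by apply: sep_notin s2 _; rewrite inE yY orbT.
pose P := fun u => [&& u \notin K1, u \notin K2, connect (edge_minus g K1) y u &
      connect (edge_minus g K2) y u].
have : P v.
  apply: (connect_inv (P:=P) _ _ c); first by rewrite /P y1 y2 !connect0.
  move=> u w /and4P [u1 u2 c1 c2] /and3P [e _ wc].
  have w1 : w \notin K1.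
    apply/negP=> w1; move: wc; rewrite /kc in_setD !in_setU w1 andbT negbK.
    have wN1 : w \notin NR g Y K1 by apply/negP=> /(subsetP (NR_sub g Y K1)); rewrite !inE w1.
    rewrite (negbTE wN1) /= => wN2.
    have w2 : w \notin K2 by move: wN2; rewrite /NR !inE => /andP [/andP []].
    apply: (@NR_unreach V g Y K2 y w wN2 yY y2).
    apply: connect_trans c2 _; apply: connect1; by rewrite /edge_minus e u2 w2.
  have w2 : w \notin K2.
    apply/negP=> w2; move: wc; rewrite /kc in_setD !in_setU w2 orbT andbT negbK.
    have wN2 : w \notin NR g Y K2 by apply/negP=> /(subsetP (NR_sub g Y K2)); rewrite !inE w2.
    rewrite (negbTE wN2) orbF => wN1.
    apply: (@NR_unreach V g Y K1 y w wN1 yY y1).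
    apply: connect_trans c1 _; apply: connect1; by rewrite /edge_minus e u1 w1.
  rewrite /P w1 w2 /=; apply/andP; split.
    apply: connect_trans c1 _; apply: connect1; by rewrite /edge_minus e u1 w1.
  apply: connect_trans c2 _; apply: connect1; by rewrite /edge_minus e u2 w2.
by case/and4P.
Qed.

Lemma kc_sep : separator g X Y (kc K1 K2).
Proof.
split; first exact: sep_union_sub (kc_sub _ _).
apply/existsP=> [[x /andP [xX /existsP [y /andP [yY /and3P [_ _ c]]]]]].
rewrite connect_minus_sym in c.
case: (reach_c yY c) => x1 _ c1 _.
have y1 : y \notin K1 by apply: sep_notin s1 _; rewrite inE yY orbT.
exact: (@NR_unreach V g Y K1 y x (X_NR s1 xX (subsetP Xv x xX)) yY y1 c1).
Qed.

Lemma NR_kc : NR g Y K1 \subset NR g Y (kc K1 K2).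
Proof.
apply/subsetP=> v vN.
have := subsetP (NR_sub g Y K1) v vN; rewrite inE => /andP [v1 vv].
rewrite /NR inE inE vv /=.
have -> : v \notin kc K1 K2 by rewrite /kc in_setD in_setU vN.
apply/existsPn=> y; apply/negP=> /andP [yY /andP [_ c]].
case: (reach_c yY c) => _ _ c1 _.
have y1 : y \notin K1 by apply: sep_notin s1 _; rewrite inE yY orbT.
exact: (@NR_unreach V g Y K1 y v vN yY y1 c1).
Qed.

Lemma ka_sep : separator g X Y (ka K1 K2).
Proof.
split; first exact: sep_union_sub (ka_sub _ _).
apply/existsP=> [[x /andP [xX /existsP [y /andP [yY /and3P [_ _ c]]]]]].
rewrite connect_minus_sym in c.
have y1 : y \notin K1 by apply: sep_notin s1 _; rewrite inE yY orbT.
have y2 : y \notin K2 by apply: sep_notin s2 _; rewrite inE yY orbT.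
pose P := fun u => ~~ ((u \in NR g Y K1) && (u \in NR g Y K2)).
have : P x.
  apply: (connect_inv (P:=P) _ _ c).
    rewrite /P; apply/negP=> /andP [yN _].
    exact: (@NR_unreach V g Y K1 y y yN yY y1 (connect0 _ _)).
  move=> u w Pu /and3P [e ua wa]; rewrite /P; apply/negP=> /andP [wN1 wN2].
  have w1 : w \notin K1 by move: wN1; rewrite /NR !inE => /andP [/andP []].
  have w2 : w \notin K2 by move: wN2; rewrite /NR !inE => /andP [/andP []].
  have uv := edge_vL e.
  move: ua; rewrite /ka !in_setU !in_setI !negb_or => /andP [/andP [h12 h1N] h2N].
  case: (boolP (u \in K1)) => u1; case: (boolP (u \in K2)) => u2;
    move: h12 h1N h2N; rewrite ?u1 ?u2 //= => _.
  - move=> uN2 _; by move: (step_NR uv u2 uN2 w2 e); rewrite wN2.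
  - move=> _ uN1; by move: (step_NR uv u1 uN1 w1 e); rewrite wN1.
  - move=> _ _; move: Pu; rewrite /P negb_and => /orP [uN1|uN2].
      by move: (step_NR uv u1 uN1 w1 e); rewrite wN1.
    by move: (step_NR uv u2 uN2 w2 e); rewrite wN2.
rewrite /P (X_NR s1 xX (subsetP Xv x xX)) (X_NR s2 xX (subsetP Xv x xX)).
by [].
Qed.

Lemma card_kcka : #|kc K1 K2| + #|ka K1 K2| <= #|K1| + #|K2|.
Proof.
rewrite -cardsUI -(cardsUI K1 K2) leq_add //; apply: subset_leq_card.
  by rewrite subUset kc_sub ka_sub.
apply/subsetP=> v; rewrite /kc /ka !(in_setI, in_setU, in_setD).
by case: (v \in K1); case: (v \in K2); case: (v \in NR g Y K1); case: (v \in NR g Y K2).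
Qed.

End Core.

Section Uniq.
Variable V : finType.
Variables (g : graph V) (X Y S : {set V}).
Hypothesis Xv : X \subset verts g.

Lemma disjU2 (A B : {set V}) : [disjoint A & S] -> [disjoint B & S] ->
  [disjoint A :|: B & S].
Proof.
rewrite -!setI_eq0 setIUl => /eqP -> /eqP ->; by rewrite setU0.
Qed.

Lemma half K1 K2 : isKS g X Y S K1 -> isKS g X Y S K2 ->
  NR g Y K2 \subset NR g Y K1.
Proof.
case=> _ _ [sp1 d1 m1] [_ imp1]; case=> _ _ [sp2 d2 m2] _.
have c21 := m2 _ sp1 d1.
have kas := ka_sep Xv sp1 sp2.
have kad : [disjoint ka g Y K1 K2 & S] by apply: disjointWl (ka_sub _ _ _ _) (disjU2 d1 d2).
have c1a := m1 _ kas kad.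
have cc := card_kcka g Y K1 K2.
have kcle : #|kc g Y K1 K2| <= #|K1| by rewrite -(leq_add2r #|ka g Y K1 K2|); apply: leq_trans cc _; rewrite leq_add2l; apply: leq_trans c21 c1a.
have kcs := kc_sep Xv sp1 sp2.
have sub1 := NR_kc sp1 sp2.
have eqN : NR g Y (kc g Y K1 K2) = NR g Y K1.
  case: (eqVneq (NR g Y (kc g Y K1 K2)) (NR g Y K1)) => // ne; exfalso; apply: imp1; exists (kc g Y K1 K2); split=> //.
have sub2 := NR_kc sp2 sp1.
by rewrite kcC eqN in sub2.
Qed.

Lemma uniq_KS K1 K2 : isKS g X Y S K1 -> isKS g X Y S K2 -> K1 = K2.
Proof.
move=> h1 h2; have eN : NR g Y K1 = NR g Y K2.
  by apply/eqP; rewrite eqEsubset (half h1 h2) (half h2 h1).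
case: (h1) => _ _ [sp1 _ _] [[_ min1] _]; case: (h2) => _ _ [sp2 _ _] [[_ min2] _].
have kas := ka_sep Xv sp1 sp2.
have kai : ka g Y K1 K2 \subset K1 :&: K2.
  apply/subsetP=> v; rewrite /ka !(in_setU, in_setI) -eN.
  have : (v \in K1) && (v \in NR g Y K1) = false.
    by rewrite /NR inE in_setD; case: (v \in K1).
  have : (v \in K2) && (v \in NR g Y K1) = false.
    by rewrite eN /NR inE in_setD; case: (v \in K2).
  by case: (v \in K1); case: (v \in K2); case: (v \in NR g Y K1) => //= -> .
have e1 : ka g Y K1 K2 = K1.
  case: (eqVneq (ka g Y K1 K2) K1) => // ne; exfalso; apply: (min1 _ _ kas).
  by rewrite properEneq ne (subset_trans kai (subsetIl _ _)).
have e2 : ka g Y K1 K2 = K2.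
  case: (eqVneq (ka g Y K1 K2) K2) => // ne; exfalso; apply: (min2 _ _ kas).
  by rewrite properEneq ne (subset_trans kai (subsetIr _ _)).
exact: etrans (esym e1) e2.
Qed.

End Uniq.

Lemma cw_uniq (V : finType) (X Y : {set V}) (Ss : seq {set V}) :
  forall (g : graph V) (K K' : {set V}), X \subset verts g ->
  compound_witness g X Y Ss K -> compound_witness g X Y Ss K' -> K = K'.
Proof.
elim: Ss => [|S1 rest IH] g K K' Xv //=.
case: rest IH => [|S2 rest'] IH.
  case=> _ _ h1 [_ _ h2]; exact: (uniq_KS Xv h1 h2).
case=> _ [K1 [h1 _ c1]] [_ [K2 [h2 _ c2]]].
have e := uniq_KS Xv h1 h2; subst K2.
apply: (IH (Pr g X Y K1)) => //.
apply/subsetP=> x xX; rewrite /Pr /= !inE xX /=; exact: (subsetP Xv).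
Qed.

Theorem corollary2 (V : finType) (G : graph V) (X Y : {set V}) :
  X \subset verts G -> Y \subset verts G -> [disjoint X & Y] ->
  normalized G X Y ->
  forall Ss : seq {set V},
    (forall S, S \in Ss -> S \subset verts G) ->
    (forall S, S \in Ss -> S != set0) ->
    pairwise (fun A B : {set V} => [disjoint A & B]) Ss ->
    forall K K' : {set V},
      compound_witness G X Y Ss K -> compound_witness G X Y Ss K' -> K = K'.
Proof.
move=> Xv _ _ _ Ss _ _ _ K K'; exact: cw_uniq.
Qed.
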